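(* Let $\phi=\langle X,Q,D,C\rangle$ be a QCSP with $C=\{c_1,\dots,c_m\}$, and for each $k\in\{1,\dots,m\}$ let $\phi_k=\langle X,Q,D,\{c_k\}\rangle$. Then for all $x_i\in X$, $V\subseteq X$ and $a,b\in D_{x_i}$: $\bigl(\bigvee_{k}\textsl{inconsistent}^{\phi_k}(x_i,a)\bigr)\rightarrow\textsl{inconsistent}^\phi(x_i,a)$; $\bigl(\bigvee_{k}\textsl{implied}^{\phi_k}(x_i,a)\bigr)\rightarrow\textsl{implied}^\phi(x_i,a)$; $\bigl(\bigwedge_{k}\textsl{d-fixable}^{\phi_k}(x_i,a)\bigr)\rightarrow\textsl{d-fixable}^\phi(x_i,a)$; $\bigl(\bigwedge_{k}\textsl{d-substitutable}^{\phi_k}(x_i,a,b)\bigr)\rightarrow\textsl{d-substitutable}^\phi(x_i,a,b)$; $\bigl(\bigwedge_{k}\textsl{d-interchangeable}^{\phi_k}(x_i,a,b)\bigr)\rightarrow\textsl{d-interchangeable}^\phi(x_i,a,b)$; $\bigl(\bigvee_{k}\textsl{determined}^{\phi_k}(x_i)\bigr)\rightarrow\textsl{determined}^\phi(x_i)$; $\bigl(\bigwedge_{k}\textsl{d-irrelevant}^{\phi_k}(x_i)\bigr)\rightarrow\textsl{d-irrelevant}^\phi(x_i)$; $\bigl(\bigvee_{k}\textsl{dependent}^{\phi_k}(V,x_i)\bigr)\rightarrow\textsl{dependent}^\phi(V,x_i)$.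
   Context: Fix a finite set $\mathbb{D}$. For a finite set $V$ of variables, a $V$-tuple is a map $t:V\to\mathbb{D}$, written $x\mapsto t_x$; a $V$-relation is a set of $V$-tuples. A QCSP is a tuple $\phi=\langle X,Q,D,C\rangle$ where $X=\{x_1,\dots,x_n\}$ is a finite set of variables linearly ordered by index, $Q$ assigns to each $x_i$ a quantifier $Q_{x_i}\in\{\forall,\exists\}$, $D$ assigns to each $x_i$ a domain $D_{x_i}\subseteq\mathbb{D}$, and $C$ is a finite set of constraints, each being a $V$-relation for some $V\subseteq X$. For $V\subseteq X$, $\prod_{x\in V}D_x$ denotes the set of $V$-tuples $t$ with $t_x\in D_x$ for all $x\in V$. For an $X$-tuple $t$, $x\in X$, $a\in\mathbb{D}$, $t[x:=a]$ is the tuple equal to $t$ except that its value at $x$ is $a$; $t|_U$ is the restriction to $U$. Let $E=\{x_i:Q_{x_i}=\exists\}$, $A=\{x_i:Q_{x_i}=\forall\}$, $A_j=\{x_i\in A:i\le j\}$. $\mathrm{sol}^\phi$ is the set of $t\in\prod_{x\in X}D_x$ with $t|_V\in c$ for every $V$-relation $c\in C$. A strategy is a family $s=(s_{x_i})_{x_i\in E}$ of functions $s_{x_i}:\prod_{y\in A_{i-1}}D_y\to D_{x_i}$; its scenarios $\mathrm{sce}^\phi(s)$ are the $t\in\prod_{x\in X}D_x$ with $t_{x_i}=s_{x_i}(t|_{A_{i-1}})$ for all $x_i\in E$; $s$ is winning if $\mathrm{sce}^\phi(s)\subseteq\mathrm{sol}^\phi$; $\mathrm{out}^\phi=\bigcup_{s\text{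 winning}}\mathrm{sce}^\phi(s)$. Deep properties, for a QCSP $\psi$ and $\mathrm{out}=\mathrm{out}^\psi$: $\textsl{inconsistent}^\psi(x_i,a)$ iff $\forall t\in\mathrm{out}.\ t_{x_i}\ne a$; $\textsl{implied}^\psi(x_i,a)$ iff $\forall t\in\mathrm{out}.\ t_{x_i}=a$; $\textsl{d-fixable}^\psi(x_i,a)$ iff $\forall t\in\mathrm{out}.\ t[x_i:=a]\in\mathrm{out}$; $\textsl{d-substitutable}^\psi(x_i,a,b)$ iff $\forall t\in\mathrm{out}.\ (t_{x_i}=a)\rightarrow t[x_i:=b]\in\mathrm{out}$; $\textsl{d-interchangeable}^\psi(x_i,a,b)$ iff $\textsl{d-substitutable}^\psi(x_i,a,b)\wedge\textsl{d-substitutable}^\psi(x_i,b,a)$; $\textsl{determined}^\psi(x_i)$ iff $\forall t\in\mathrm{out}.\ \forall b\in D_{x_i}\setminus\{t_{x_i}\}.\ t[x_i:=b]\notin\mathrm{out}$; $\textsl{d-irrelevant}^\psi(x_i)$ iff $\forall t\in\mathrm{out}.\ \forall b\in D_{x_i}.\ t[x_i:=b]\in\mathrm{out}$; $\textsl{dependent}^\psi(V,x_i)$ iff $\forall t,t'\in\mathrm{out}.\ (t|_V=t'|_V)\rightarrow t_{x_i}=t'_{x_i}$. *)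

(* Defs.v *)
From mathcomp Require Import all_boot.
From Stdlib Require List.
Set Implicit Arguments. Unset Strict Implicit. Unset Printing Implicit Defensive.

(* The finite universe of values 𝔻 is a finType T.  Variables x_1..x_n are
   the ordinals 'I_n (0-based, with the linear order by index).
   An X-tuple is a function 'I_n -> T; a V-tuple (V : {set 'I_n}) is a
   function {y | y \in V} -> T; a V-relation is a set (Prop predicate) of
   V-tuples. *)

Inductive quant := QForall | QExists.

Definition is_forall (q : quant) : bool := if q is QForall then true else false.

Record constraint (n : nat) (T : Type) := Constraint {
  scope : {set 'I_n};
  rel : ({y : 'I_n | y \in scope} -> T) -> Prop }.

Section QCSP.
Variables (T : finType) (n : nat) (Q : 'I_n -> quant) (D : 'I_n -> {set T})
          (C : seq (constraint n T)).

Definition restr (V : {set 'I_n}) (t : 'I_n -> T) : {y : 'I_n | y \in V} -> T :=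
  fun y => t (val y).

Definition upd (t : 'I_n -> T) (x : 'I_n) (a : T) : 'I_n -> T :=
  fun j => if j == x then a else t j.

Definition in_dom (t : 'I_n -> T) : Prop := forall i, t i \in D i.

Definition sol (t : 'I_n -> T) : Prop :=
  in_dom t /\ forall c, List.In c C -> @rel n T c (@restr (@scope n T c) t).

Definition Abefore (i : 'I_n) : {set 'I_n} :=
  [set y : 'I_n | is_forall (Q y) && (y < i)].

Definition strategy :=
  forall i : 'I_n, Q i = QExists -> ({y : 'I_n | y \in Abefore i} -> T) -> T.

Definition valid_strategy (s : strategy) : Prop :=
  forall i (h : Q i = QExists) (u : {y : 'I_n | y \in Abefore i} -> T),
    (forall y, u y \in D (val y)) -> s i h u \in D i.

Definition sce (s : strategy) (t : 'I_n -> T) : Prop :=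
  in_dom t /\ forall i (h : Q i = QExists), t i = s i h (@restr (Abefore i) t).

Definition winning (s : strategy) : Prop := forall t, sce s t -> sol t.

Definition out (t : 'I_n -> T) : Prop :=
  exists s : strategy, valid_strategy s /\ winning s /\ sce s t.

Definition inconsistent (x : 'I_n) (a : T) : Prop :=
  forall t, out t -> t x <> a.
Definition implied (x : 'I_n) (a : T) : Prop :=
  forall t, out t -> t x = a.
Definition d_fixable (x : 'I_n) (a : T) : Prop :=
  forall t, out t -> out (upd t x a).
Definition d_substitutable (x : 'I_n) (a b : T) : Prop :=
  forall t, out t -> t x = a -> out (upd t x b).
Definition d_interchangeable (x : 'I_n) (a b : T) : Prop :=
  d_substitutable x a b /\ d_substitutable x b a.
Definition determined (x : 'I_n) : Prop :=
  forall t, out t -> forall b, b \in D x -> b <> t x -> ~ out (upd t x b).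
Definition d_irrelevant (x : 'I_n) : Prop :=
  forall t, out t -> forall b, b \in D x -> out (upd t x b).
Definition dependent (V : {set 'I_n}) (x : 'I_n) : Prop :=
  forall t t', out t -> out t' -> (forall y, y \in V -> t y = t' y) -> t x = t' x.

End QCSP.

(* Main.v *)
Require Import Defs.
From mathcomp Require Import all_boot.
From Stdlib Require List.
From Stdlib Require Import FunctionalExtensionality ProofIrrelevance.

Section Aux.
Variables (T : finType) (n : nat) (Q : 'I_n -> quant) (D : 'I_n -> {set T}).

Lemma sol_sub (C : seq (constraint n T)) c t :
  List.In c C -> sol D C t -> sol D [:: c] t.
Proof.
move=> Hc [Hd Hr]; split=> // c' /= [<-|[]]; exact: Hr.
Qed.

Lemma sol_all (C : seq (constraint n T)) t :
  in_dom D t -> (forall c, List.In c C -> sol D [:: c] t) -> sol D C t.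
Proof.
move=> Hd H; split=> // c Hc; case: (H c Hc) => _ Hr; apply: Hr; by left.
Qed.

Lemma out_sub (C : seq (constraint n T)) c t :
  List.In c C -> out Q D C t -> out Q D [:: c] t.
Proof.
move=> Hc [s [Hv [Hw Hs]]]; exists s; split=> //; split=> // t' Ht'.
exact: (@sol_sub C c t' Hc (Hw t' Ht')).
Qed.

Lemma upd_upd_same (t : 'I_n -> T) x (b c : T) : t x = b -> upd (upd t x c) x b = t.
Proof.
move=> H; apply: functional_extensionality => j; rewrite /upd.
by case: eqP => // ->.
Qed.

Lemma key (C : seq (constraint n T)) (s : strategy T Q) t x b (P : pred T) :
  valid_strategy D s -> winning D C s -> sce D s t -> b \in D x -> P (t x) ->
  (forall v, sce D s v -> P (v x) -> sol D C (upd v x b)) ->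
  out Q D C (upd t x b).
Proof.
move=> Hv Hw [Htd Hts] Hb Pt Hkey.
have Hud : in_dom D (upd t x b).
  by move=> j; rewrite /upd; case: eqP => [->|]; [exact Hb|move=> _; exact: Htd].
case Qx: (Q x).
-
  pose s' : strategy T Q := fun j h u =>
    s j h (fun y => if (val y == x) && (u y == b) then t x else u y).
  exists s'; split; [|split].
  + move=> j h u Hu; apply: Hv => y; case: ifP => [/andP[/eqP <- _]|_].
      exact: Htd.
    exact: Hu.
  + move=> t' [Ht'd Ht's].
    case: (boolP (t' x == b)) => [/eqP Hxb | Hxb].
    * pose v := upd t' x (t x).
      have Hvs : sce D s v.
        split.
          by move=> j; rewrite /v /upd; case: eqP => [->|_]; [exact: Htd|exact: Ht'd].
        move=> j h.
        have jx : j != x by apply/eqP => E; move: h; rewrite E Qx.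
        rewrite /v /upd (negbTE jx) Ht's /s'; congr (s j h).
        apply: functional_extensionality => y; rewrite /restr /upd.
        by case: eqP => [->|]; rewrite ?Hxb ?eqxx.
      have := Hkey v Hvs; rewrite /v /upd eqxx => /(_ Pt).
      by rewrite -/(upd (upd t' x (t x)) x b) upd_upd_same.
    * apply: Hw; split=> // j h; rewrite Ht's /s'; congr (s j h).
      apply: functional_extensionality => y; rewrite /restr.
      case: eqP => [E|] //=; by rewrite E (negbTE Hxb).
  + split=> // j h.
    have jx : j != x by apply/eqP => E; move: h; rewrite E Qx.
    rewrite /s' /upd (negbTE jx) Hts; congr (s j h).
    apply: functional_extensionality => y; rewrite /restr /upd.
    by case: eqP => [->|] /=; rewrite ?eqxx.
-
  have NA : forall j, x \notin Abefore Q j.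
    by move=> j; rewrite /Abefore inE Qx.
  have Hr : forall j (t0 : 'I_n -> T) (c : T), @restr T n (Abefore Q j) (upd t0 x c) = @restr T n (Abefore Q j) t0.
    move=> j t0 c; apply: functional_extensionality => y; rewrite /restr /upd.
    case: eqP => // E; case: y E => y Hy /= E; by rewrite E (negbTE (NA j)) in Hy.
  pose s' : strategy T Q := fun j h u =>
    if (j == x) && P (s j h u) then b else s j h u.
  exists s'; split; [|split].
  + move=> j h u Hu; rewrite /s'; case: ifP => [/andP[/eqP E _]|_]; first by rewrite E.
    exact: Hv.
  + move=> t' [Ht'd Ht's].
    pose w := s x Qx (@restr T n (Abefore Q x) t').
    pose v := upd t' x w.
    have Hvs : sce D s v.
      split.
        move=> j; rewrite /v /upd; case: eqP => [->|_]; last exact: Ht'd.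
        apply: Hv => y; exact: Ht'd.
      move=> j h; rewrite /v Hr /upd; case: eqP => [E|/eqP jx].
        subst j; by rewrite (proof_irrelevance _ h Qx).
      by rewrite Ht's /s' (negbTE jx).
    have Ht'x := Ht's x Qx; rewrite /s' eqxx /= -/w in Ht'x.
    case Pw: (P w); rewrite Pw in Ht'x.
    * have := Hkey v Hvs; rewrite /v /upd eqxx => /(_ Pw).
      by rewrite -/(upd (upd t' x w) x b) upd_upd_same.
    * apply: Hw; suff -> : t' = v by [].
      apply: functional_extensionality => j; rewrite /v /upd.
      by case: eqP => // ->.
  + split=> // j h; rewrite /s' Hr; case: eqP => [E|/eqP jx] /=.
      subst j; rewrite -Hts Pt /upd eqxx //.
    by rewrite /upd (negbTE jx) Hts.
Qed.

End Aux.

Theorem proposition14 (T : finType) (n : nat) (Q : 'I_n -> quant)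
    (D : 'I_n -> {set T}) (C : seq (constraint n T))
    (x : 'I_n) (V : {set 'I_n}) (a b : T) :
  a \in D x -> b \in D x ->
    ((exists c, List.In c C /\ inconsistent Q D [:: c] x a) ->
        inconsistent Q D C x a) /\
  ((exists c, List.In c C /\ implied Q D [:: c] x a) ->
        implied Q D C x a) /\
  ((forall c, List.In c C -> d_fixable Q D [:: c] x a) ->
        d_fixable Q D C x a) /\
  ((forall c, List.In c C -> d_substitutable Q D [:: c] x a b) ->
        d_substitutable Q D C x a b) /\
  ((forall c, List.In c C -> d_interchangeable Q D [:: c] x a b) ->
        d_interchangeable Q D C x a b) /\
  ((exists c, List.In c C /\ determined Q D [:: c] x) ->
        determined Q D C x) /\
  ((forall c, List.In c C -> d_irrelevant Q D [:: c] x) ->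
        d_irrelevant Q D C x) /\
  ((exists c, List.In c C /\ dependent Q D [:: c] V x) ->
        dependent Q D C V x).
Proof.
move=> Ha Hb.
have Subst : forall a' b', b' \in D x ->
    (forall c, List.In c C -> d_substitutable Q D [:: c] x a' b') ->
    d_substitutable Q D C x a' b'.
  move=> a' b' Hb' H t [s [Hv [Hw Hs]]] Hta.
  apply: (@key _ _ _ _ _ _ _ _ _ (pred1 a') Hv Hw Hs Hb'); first by rewrite /= Hta.
  move=> v Hvs /eqP Hva.
  have Hvo : out Q D C v by exists s.
  apply: sol_all.
    move=> j; rewrite /upd; case: eqP => [->|_] //; case: Hvs => Hd _; exact: Hd.
  move=> c Hc.
  have [s2 [_ [Hw2 Hs2]]] := H c Hc v (@out_sub _ _ _ _ _ _ _ Hc Hvo) Hva.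
  exact: Hw2.
split; [|split; [|split; [|split; [|split; [|split; [|split]]]]]].
- move=> [c [Hc H]] t Ht; exact: H _ (@out_sub _ _ _ _ _ _ _ Hc Ht).
- move=> [c [Hc H]] t Ht; exact: H _ (@out_sub _ _ _ _ _ _ _ Hc Ht).
- move=> H t [s [Hv [Hw Hs]]].
  apply: (@key _ _ _ _ _ _ _ _ _ predT Hv Hw Hs Ha) => // v Hvs _.
  have Hvo : out Q D C v by exists s.
  apply: sol_all.
    move=> j; rewrite /upd; case: eqP => [->|_] //; case: Hvs => Hd _; exact: Hd.
  move=> c Hc.
  have [s2 [_ [Hw2 Hs2]]] := H c Hc v (@out_sub _ _ _ _ _ _ _ Hc Hvo).
  exact: Hw2.
- exact: Subst.
- move=> H; split; apply: Subst => // c Hc; by case: (H c Hc).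
- move=> [c [Hc H]] t Ht b' Hb' Hne Ho.
  exact: (H t (@out_sub _ _ _ _ _ _ _ Hc Ht) b' Hb' Hne (@out_sub _ _ _ _ _ _ _ Hc Ho)).
- move=> H t [s [Hv [Hw Hs]]] b' Hb'.
  apply: (@key _ _ _ _ _ _ _ _ _ predT Hv Hw Hs Hb') => // v Hvs _.
  have Hvo : out Q D C v by exists s.
  apply: sol_all.
    move=> j; rewrite /upd; case: eqP => [->|_] //; case: Hvs => Hd _; exact: Hd.
  move=> c Hc.
  have [s2 [_ [Hw2 Hs2]]] := H c Hc v (@out_sub _ _ _ _ _ _ _ Hc Hvo) b' Hb'.
  exact: Hw2.
- move=> [c [Hc H]] t t' Ht Ht' E; exact: H _ _ (@out_sub _ _ _ _ _ _ _ Hc Ht) (@out_sub _ _ _ _ _ _ _ Hc Ht') E.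
Qed.
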